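(* For each $f\in\{1,2,3,4\}$, $\mathcal{C}(4,f)\neq\emptyset$; that is, there exists a transitive circle exchange transformation of $4$ subintervals with exactly $f$ flips.
   Context: Let $S^1=[0,1]/(0\sim1)$ with orientation induced by $[0,1]$. An $n$-CET is an injective map $T:\bigcup_{i=1}^n I_i\to S^1$, where $I_1,\dots,I_n$ are pairwise disjoint open subintervals of $S^1$ whose closures cover $S^1$, which is an isometry on each $I_i$ and cannot be continuously extended to a larger open subset of $S^1$. A flip is an $I_i$ on which $T$ reverses orientation. $T$ is transitive if some orbit $\{T^m(p): m\in\mathbb{Z},\ p\in\mathrm{Dom}(T^m)\}$ is dense in $S^1$. $\mathcal{C}(n,f)$ is the set of transitive $n$-CETs with exactly $f$ flips. *)

(* Defs.v *)
From Stdlib Require Import Reals Lra List.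
Open Scope R_scope.

(* The circle S^1 = [0,1]/(0~1) is represented by the points x with 0 <= x < 1;
   the projection R -> S^1 is frac_part.  Orientation: increasing direction. *)
Definition circ_pt (x : R) : Prop := 0 <= x < 1.

Definition cdist (x y : R) : R := Rmin (Rabs (x - y)) (1 - Rabs (x - y)).

Definition arc (a l : R) (x : R) : Prop :=
  exists t, 0 < t < l /\ x = frac_part (a + t).

Definition carc (a l : R) (x : R) : Prop :=
  exists t, 0 <= t <= l /\ x = frac_part (a + t).

Definition open_arc (a l : R) : Prop := 0 <= a < 1 /\ 0 < l <= 1.

Definition Dom (n : nat) (a l : nat -> R) (x : R) : Prop :=
  exists i, (i < n)%nat /\ arc (a i) (l i) x.

Definition preserves (a l : R) (T : R -> R) : Prop :=
  exists c, forall t, 0 < t < l -> T (frac_part (a + t)) = frac_part (c + t).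

Definition reverses (a l : R) (T : R -> R) : Prop :=
  exists c, forall t, 0 < t < l -> T (frac_part (a + t)) = frac_part (c - t).

Definition is_CET (n : nat) (a l : nat -> R) (T : R -> R) : Prop :=
  (forall i, (i < n)%nat -> open_arc (a i) (l i)) /\
  (forall i j x, (i < n)%nat -> (j < n)%nat -> i <> j ->
     arc (a i) (l i) x -> arc (a j) (l j) x -> False) /\
  (forall x, circ_pt x -> exists i, (i < n)%nat /\ carc (a i) (l i) x) /\
  (forall x y, Dom n a l x -> Dom n a l y -> T x = T y -> x = y) /\
  (forall i, (i < n)%nat -> preserves (a i) (l i) T \/ reverses (a i) (l i) T) /\
  (* cannot be continuously extended to a larger open subset of S^1:
     at no point p outside the domain does T have a limit in S^1 *)
  (forall p, circ_pt p -> ~ Dom n a l p ->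
     ~ (exists y, circ_pt y /\
          forall eps, 0 < eps -> exists delta, 0 < delta /\
            forall z, Dom n a l z -> cdist z p < delta -> cdist (T z) y < eps)).

Fixpoint iter_def (n : nat) (a l : nat -> R) (T : R -> R) (m : nat) (x y : R)
  : Prop :=
  match m with
  | O => x = y
  | S m' => Dom n a l x /\ iter_def n a l T m' (T x) y
  end.

(* q = T^m p for some m in Z with p in Dom(T^m)  (negative m: T^(-m) q = p) *)
Definition orbit (n : nat) (a l : nat -> R) (T : R -> R) (p q : R) : Prop :=
  exists m : nat, iter_def n a l T m p q \/ iter_def n a l T m q p.

Definition transitive (n : nat) (a l : nat -> R) (T : R -> R) : Prop :=
  exists p, circ_pt p /\
    forall y, circ_pt y -> forall eps, 0 < eps ->
      exists q, orbit n a l T p q /\ cdist q y < eps.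

Definition nflips (n : nat) (a l : nat -> R) (T : R -> R) (f : nat) : Prop :=
  exists s : nat -> bool,
    (forall i, (i < n)%nat -> (s i = true <-> reverses (a i) (l i) T)) /\
    length (filter s (seq 0 n)) = f.

Definition in_C (n f : nat) (a l : nat -> R) (T : R -> R) : Prop :=
  is_CET n a l T /\ transitive n a l T /\ nflips n a l T f.

(* Main.v *)
Require Import Defs.
From Stdlib Require Import Reals.
From Stdlib Require Import Lra Lia List ZArith.
Open Scope R_scope.

Lemma frac_eq (x : R) (z : Z) : IZR z <= x < IZR z + 1 -> frac_part x = x - IZR z.
Proof.
  intros H. destruct (Int_part_frac_part_spec x z (x - IZR z)) as [_ H2]; [lra|ring|].
  now rewrite <- H2.
Qed.

Lemma frac_id (x : R) : 0 <= x < 1 -> frac_part x = x.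
Proof. intros H. rewrite (frac_eq x 0); simpl; lra. Qed.

Lemma frac_shift (x : R) (z : Z) : frac_part (x + IZR z) = frac_part x.
Proof.
  pose proof (base_fp x) as [H1 H2].
  pose proof (Rplus_Int_part_frac_part x) as E.
  rewrite (frac_eq (x + IZR z) (Int_part x + z)); rewrite plus_IZR.
  - unfold frac_part. ring.
  - lra.
Qed.

Lemma frac_diff (a b : R) : frac_part a = frac_part b -> exists z, a - b = IZR z.
Proof.
  unfold frac_part. intros H. exists (Int_part a - Int_part b)%Z.
  rewrite minus_IZR. lra.
Qed.

Lemma IZR_not_01 (z : Z) : 0 < IZR z < 1 -> False.
Proof.
  intros [H1 H2]. apply lt_IZR in H1. apply lt_IZR in H2. lia.
Qed.

Lemma cdist_le_abs x y : cdist x y <= Rabs (x - y).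
Proof. unfold cdist. apply Rmin_l. Qed.

Lemma cdist_sym x y : cdist x y = cdist y x.
Proof. unfold cdist. rewrite Rabs_minus_sym. reflexivity. Qed.

Lemma cdist_tri x y z : 0 <= x <= 1 -> 0 <= y <= 1 -> 0 <= z <= 1 ->
  cdist x z <= cdist x y + cdist y z.
Proof.
  intros Hx Hy Hz. unfold cdist, Rmin.
  repeat (destruct (Rle_dec _ _)); unfold Rabs in *;
  repeat (destruct (Rcase_abs _)); lra.
Qed.

Lemma cdist_pos x y : 0 < Rabs (x - y) < 1 -> 0 < cdist x y.
Proof. intros H. unfold cdist, Rmin. destruct (Rle_dec _ _); lra. Qed.

Lemma iter_app n a l T m k x y z :
  iter_def n a l T m x y -> iter_def n a l T k y z -> iter_def n a l T (m + k) x z.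
Proof.
  revert x. induction m as [|m IH]; simpl; intros x H1 H2.
  - subst. exact H2.
  - destruct H1 as [HD H1]. split; [exact HD|]. apply IH; assumption.
Qed.


Definition gg : R := (sqrt 5 - 1) / 2.

Lemma gg_facts : gg * gg = 1 - gg /\ 0.6 < gg < 0.625.
Proof.
  unfold gg. pose proof (sqrt_pos 5) as H0. pose proof (sqrt_sqrt 5) as H1.
  assert (Hs : 2.2 < sqrt 5 < 2.25) by nra.
  split; nra.
Qed.

Fixpoint ab (n : nat) : Z * Z :=
  match n with O => (1%Z, 0%Z) | S n => (snd (ab n), (fst (ab n) - snd (ab n))%Z) end.

Lemma gg_pow n : gg ^ n = IZR (fst (ab n)) + IZR (snd (ab n)) * gg.
Proof.
  destruct gg_facts as [Hg _].
  induction n as [|n IH]; simpl.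
  - ring.
  - rewrite IH, minus_IZR.
    transitivity (IZR (fst (ab n)) * gg + IZR (snd (ab n)) * (gg * gg)); [ring|].
    rewrite Hg. ring.
Qed.

Lemma gg_bern n : gg ^ n * (1 + INR n * gg) <= 1.
Proof.
  destruct gg_facts as [Hg Hb].
  induction n as [|n IH].
  - simpl. lra.
  - rewrite S_INR. simpl.
    assert (Hp : 0 < gg ^ n) by (apply pow_lt; lra).
    pose proof (pos_INR n).
    assert (E : gg * gg ^ n * (1 + (INR n + 1) * gg) = gg ^ n * (1 + INR n * (gg * gg))).
    { transitivity (gg ^ n * (gg + gg * gg + INR n * (gg * gg))); [ring|].
      rewrite Hg; ring. }
    rewrite E. nra.
Qed.

Lemma IZR_le_INR z : IZR z <= INR (Z.to_nat z).
Proof.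
  destruct (Z_lt_le_dec z 0) as [H|H].
  - destruct z as [|p|p]; try lia. rewrite Z2Nat.inj_neg. simpl. apply IZR_lt in H. lra.
  - rewrite INR_IZR_INZ, Z2Nat.id by lia. lra.
Qed.

Lemma gg_small e : 0 < e -> exists n, (1 <= n)%nat /\ gg ^ n < e.
Proof.
  intros He. destruct gg_facts as [Hg Hb].
  set (n := S (Z.to_nat (up (/ (e * gg))))).
  exists n. split; [unfold n; lia|].
  pose proof (gg_bern n) as HB.
  assert (Hn : / (e * gg) < INR n).
  { unfold n. rewrite S_INR. pose proof (IZR_le_INR (up (/ (e*gg)))).
    pose proof (archimed (/ (e * gg))). lra. }
  assert (Hp : 0 < gg ^ n) by (apply pow_lt; lra).
  assert (H1 : 1 < INR n * gg * e).
  { assert (0 < e * gg) by nra.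
    apply Rmult_lt_compat_r with (r := e * gg) in Hn; [|lra].
    rewrite Rinv_l in Hn by lra. nra. }
  nra.
Qed.

Lemma gg_irr (k : nat) (z : Z) : (1 <= k)%nat -> INR k * gg = IZR z -> False.
Proof.
  intros Hk Hz. destruct gg_facts as [Hg Hb].
  assert (HkR : 1 <= INR k) by (apply (le_INR 1); lia).
  destruct (gg_small (/ INR k)) as [n [Hn1 Hn]]. { apply Rinv_0_lt_compat; lra. }
  assert (Hp : 0 < gg ^ n) by (apply pow_lt; lra).
  apply (IZR_not_01 (Z.of_nat k * fst (ab n) + snd (ab n) * z)).
  rewrite plus_IZR, !mult_IZR, <- INR_IZR_INZ, <- Hz, <- Rmult_assoc.
  rewrite (Rmult_comm (IZR (snd (ab n))) (INR k)), Rmult_assoc, <- Rmult_plus_distr_l,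
    <- gg_pow.
  split; [nra|].
  apply Rmult_lt_compat_l with (r := INR k) in Hn; [|lra].
  rewrite Rinv_r in Hn by lra. lra.
Qed.

Lemma gg_step e : 0 < e -> exists (N : nat) (s : R) (z : Z), 0 < s < e /\ s < 1 /\
  (INR N * gg = IZR z + s \/ INR N * gg = IZR z - s).
Proof.
  intros He. destruct gg_facts as [Hg Hb].
  destruct (gg_small (Rmin e (1/2))) as [n [Hn1 Hn]]. { apply Rmin_pos; lra. }
  assert (Hm1 := Rmin_l e (1/2)). assert (Hm2 := Rmin_r e (1/2)).
  assert (Hp : 0 < gg ^ n) by (apply pow_lt; lra).
  pose proof (gg_pow n) as E.
  destruct (Z_lt_le_dec 0 (snd (ab n))) as [H|H].
  - exists (Z.to_nat (snd (ab n))), (gg ^ n), (- fst (ab n))%Z.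
    rewrite INR_IZR_INZ, Z2Nat.id by lia. rewrite opp_IZR.
    split; [lra|]. split; [lra|]. left; lra.
  - destruct (Z.eq_dec (snd (ab n)) 0) as [H0|H0].
    + exfalso. rewrite H0 in E. apply (IZR_not_01 (fst (ab n))). simpl in E. lra.
    + exists (Z.to_nat (- snd (ab n))), (gg ^ n), (fst (ab n)).
      rewrite INR_IZR_INZ, Z2Nat.id by lia. rewrite opp_IZR.
      split; [lra|]. split; [lra|]. right; lra.
Qed.

Lemma up_nat (r : R) : 0 <= r -> INR (Z.to_nat (up r)) = IZR (up r).
Proof.
  intros H. pose proof (archimed r) as [H1 _].
  assert (0 < up r)%Z by (apply lt_IZR; lra).
  rewrite INR_IZR_INZ, Z2Nat.id by lia. reflexivity.
Qed.

Lemma density u v : 0 <= u < v -> v <= 1 ->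
  exists k : nat, u < frac_part (1/2 + INR k * gg) < v.
Proof.
  intros Hu Hv.
  destruct (gg_step (v - u)) as [N [s [z [Hs [Hs1 HN]]]]]; [lra|].
  destruct HN as [HN|HN].
  - set (u' := if Rlt_dec u (1/2) then u + 1 else u).
    assert (Hu' : 1/2 <= u' /\ (u' = u \/ u' = u + 1)) by
      (unfold u'; destruct (Rlt_dec u (1/2)); lra).
    set (r := (u' - 1/2) / s).
    assert (Hr : 0 <= r) by (unfold r; apply Rmult_le_pos; [lra| left; apply Rinv_0_lt_compat; lra]).
    set (m := Z.to_nat (up r)).
    pose proof (archimed r) as [Ha1 Ha2].
    assert (Hm : INR m = IZR (up r)) by (apply up_nat; lra).
    assert (Hrs : r * s = u' - 1/2) by (unfold r; field; lra).
    exists (m * N)%nat.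
    rewrite mult_INR, Rmult_assoc, HN.
    replace (1/2 + INR m * (IZR z + s)) with ((1/2 + INR m * s) + IZR (Z.of_nat m * z))
      by (rewrite mult_IZR, <- INR_IZR_INZ; ring).
    rewrite frac_shift.
    assert (Hlo : u' < 1/2 + INR m * s) by (rewrite Hm; nra).
    assert (Hhi : 1/2 + INR m * s <= u' + s) by (rewrite Hm; nra).
    destruct Hu' as [_ [E|E]].
    + rewrite frac_id; lra.
    + rewrite (frac_eq _ 1); simpl; lra.
  - set (v' := if Rle_dec v (1/2) then v else v - 1).
    assert (Hv' : v' <= 1/2 /\ (v' = v \/ v' = v - 1)) by
      (unfold v'; destruct (Rle_dec v (1/2)); lra).
    set (r := (1/2 - v') / s).
    assert (Hr : 0 <= r) by (unfold r; apply Rmult_le_pos; [lra| left; apply Rinv_0_lt_compat; lra]).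
    set (m := Z.to_nat (up r)).
    pose proof (archimed r) as [Ha1 Ha2].
    assert (Hm : INR m = IZR (up r)) by (apply up_nat; lra).
    assert (Hrs : r * s = 1/2 - v') by (unfold r; field; lra).
    exists (m * N)%nat.
    rewrite mult_INR, Rmult_assoc, HN.
    replace (1/2 + INR m * (IZR z - s)) with ((1/2 - INR m * s) + IZR (Z.of_nat m * z))
      by (rewrite mult_IZR, <- INR_IZR_INZ; ring).
    rewrite frac_shift.
    assert (Hlo : 1/2 - INR m * s < v') by (rewrite Hm; nra).
    assert (Hhi : v' - s <= 1/2 - INR m * s) by (rewrite Hm; nra).
    destruct Hv' as [_ [E|E]].
    + rewrite frac_id; lra.
    + rewrite (frac_eq _ (-1)); simpl; lra.
Qed.


Lemma tk_not0 (k : nat) : frac_part (1/2 + INR k * gg) <> 0.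
Proof.
  intros H. destruct (fp_nat _ H) as [w Hw].
  destruct k as [|k].
  - simpl in Hw. assert (E : IZR (2*w) = IZR 1) by (rewrite mult_IZR; simpl; lra).
    apply eq_IZR in E. lia.
  - apply (gg_irr (2 * S k) (2*w - 1)); [lia|].
    rewrite mult_INR, minus_IZR, mult_IZR. simpl (INR 2). lra.
Qed.

Lemma tk_not1g (k : nat) : frac_part (1/2 + INR k * gg) <> 1 - gg.
Proof.
  intros H. unfold frac_part in H.
  apply (gg_irr (2 * S k) (2 * Int_part (1/2 + INR k * gg) + 1)); [lia|].
  rewrite mult_INR, (S_INR k), plus_IZR, mult_IZR. simpl (INR 2). lra.
Qed.

Lemma trans_gen n a l T (L al : R) :
  0 < L <= 1 -> al = (1 - gg) * L ->
  (forall x, 0 < x < al -> exists h, iter_def n a l T h x (x + gg * L)) ->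
  (forall x, al < x < L -> exists h, iter_def n a l T h x (x - al)) ->
  (forall y, circ_pt y -> forall eps, 0 < eps -> exists j u v, 0 <= u < v /\ v <= L /\
     forall x, u < x < v -> exists q, iter_def n a l T j x q /\ cdist q y < eps) ->
  transitive n a l T.
Proof.
  intros HL Hal HA HB HC. destruct gg_facts as [Hg Hb].
  assert (Hk : forall k : nat, exists m, iter_def n a l T m (L/2) (L * frac_part (1/2 + INR k * gg))).
  { induction k as [|k [m Hm]].
    - exists O. simpl. rewrite Rmult_0_l, Rplus_0_r, frac_id by lra. simpl. lra.
    - pose proof (base_fp (1/2 + INR k * gg)) as [F1 F2].
      pose proof (tk_not0 k). pose proof (tk_not1g k).
      set (t := frac_part (1/2 + INR k * gg)) in *.
      assert (E : 1/2 + INR (S k) * gg = t + gg + IZR (Int_part (1/2 + INR k * gg))).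
      { rewrite S_INR. unfold t, frac_part. ring. }
      destruct (Rlt_dec t (1 - gg)) as [Hlt|Hge].
      + destruct (HA (L * t)) as [h Hh]. { split; [nra|]. rewrite Hal. nra. }
        exists (m + h)%nat. apply (iter_app _ _ _ _ _ _ _ _ _ Hm).
        rewrite E, frac_shift, frac_id by lra.
        replace (L * (t + gg)) with (L * t + gg * L) by ring. exact Hh.
      + destruct (HB (L * t)) as [h Hh]. { rewrite Hal. split; nra. }
        exists (m + h)%nat. apply (iter_app _ _ _ _ _ _ _ _ _ Hm).
        rewrite E, frac_shift, (frac_eq _ 1) by (simpl; lra).
        replace (L * (t + gg - IZR 1)) with (L * t - al) by (rewrite Hal; simpl; ring).
        exact Hh. }
  exists (L/2). split; [unfold circ_pt; lra|].
  intros y Hy eps Heps.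
  destruct (HC y Hy eps Heps) as [j [u [v [Huv [HvL Hx]]]]].
  destruct (density (u / L) (v / L)) as [k Hk2].
  { split. apply Rmult_le_pos; [lra| left; apply Rinv_0_lt_compat; lra].
    apply Rmult_lt_compat_r; [apply Rinv_0_lt_compat; lra| lra]. }
  { apply (Rmult_le_reg_r L); [lra|]. unfold Rdiv. rewrite Rmult_assoc, Rinv_l; lra. }
  destruct (Hk k) as [m Hm].
  set (t := frac_part (1/2 + INR k * gg)) in *.
  assert (Ht : u < L * t < v).
  { destruct Hk2 as [H1 H2]. split.
    - apply (Rmult_lt_compat_l L) in H1; [|lra]. unfold Rdiv in H1.
      rewrite <- Rmult_assoc, (Rmult_comm L u), Rmult_assoc, Rinv_r, Rmult_1_r in H1; lra.
    - apply (Rmult_lt_compat_l L) in H2; [|lra]. unfold Rdiv in H2.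
      rewrite <- Rmult_assoc, (Rmult_comm L v), Rmult_assoc, Rinv_r, Rmult_1_r in H2; lra. }
  destruct (Hx _ Ht) as [q [Hq Hqy]].
  exists q. split; [|exact Hqy].
  exists (m + j)%nat. left. eapply iter_app; eassumption.
Qed.


Lemma noext (D : R -> Prop) (T : R -> R) p uL pL pR uR cL sL cR sR :
  uL < pL -> pR < uR ->
  (forall z, uL < z < pL -> D z /\ T z = cL + sL * z /\ cdist z p <= pL - z /\ 0 <= T z <= 1) ->
  (forall z, pR < z < uR -> D z /\ T z = cR + sR * z /\ cdist z p <= z - pR /\ 0 <= T z <= 1) ->
  (sL = 1 \/ sL = -1) -> (sR = 1 \/ sR = -1) ->
  0 <= cL + sL * pL <= 1 -> 0 <= cR + sR * pR <= 1 ->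
  0 < cdist (cL + sL * pL) (cR + sR * pR) ->
  ~ (exists y, circ_pt y /\
          forall eps, 0 < eps -> exists delta, 0 < delta /\
            forall z, D z -> cdist z p < delta -> cdist (T z) y < eps).
Proof.
  intros HuL HuR HL HR HsL HsR HvL HvR Hd [y [Hy Hlim]].
  set (vL := cL + sL * pL) in *. set (vR := cR + sR * pR) in *.
  set (d := cdist vL vR) in *.
  destruct (Hlim (d/3)) as [delta [Hdel Hz]]; [lra|].
  set (mL := Rmin delta (Rmin (pL - uL) (d/6)) / 2).
  set (mR := Rmin delta (Rmin (uR - pR) (d/6)) / 2).
  assert (HmL : 0 < mL /\ mL < delta /\ mL < pL - uL /\ mL <= d/12).
  { unfold mL. pose proof (Rmin_l delta (Rmin (pL - uL) (d/6))).
    pose proof (Rmin_r delta (Rmin (pL - uL) (d/6))).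
    pose proof (Rmin_l (pL - uL) (d/6)). pose proof (Rmin_r (pL - uL) (d/6)).
    assert (0 < Rmin delta (Rmin (pL - uL) (d/6))) by
      (apply Rmin_pos; [lra| apply Rmin_pos; lra]). lra. }
  assert (HmR : 0 < mR /\ mR < delta /\ mR < uR - pR /\ mR <= d/12).
  { unfold mR. pose proof (Rmin_l delta (Rmin (uR - pR) (d/6))).
    pose proof (Rmin_r delta (Rmin (uR - pR) (d/6))).
    pose proof (Rmin_l (uR - pR) (d/6)). pose proof (Rmin_r (uR - pR) (d/6)).
    assert (0 < Rmin delta (Rmin (uR - pR) (d/6))) by
      (apply Rmin_pos; [lra| apply Rmin_pos; lra]). lra. }
  destruct (HL (pL - mL)) as [DL [TL [CL BL]]]; [lra|].
  destruct (HR (pR + mR)) as [DR [TR [CR BR]]]; [lra|].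
  assert (H1 : cdist (T (pL - mL)) y < d/3) by (apply Hz; [exact DL| lra]).
  assert (H2 : cdist (T (pR + mR)) y < d/3) by (apply Hz; [exact DR| lra]).
  assert (H3 : cdist vL (T (pL - mL)) <= mL).
  { eapply Rle_trans; [apply cdist_le_abs|]. rewrite TL. unfold vL.
    destruct HsL as [E|E]; rewrite E; unfold Rabs; destruct (Rcase_abs _); lra. }
  assert (H4 : cdist (T (pR + mR)) vR <= mR).
  { eapply Rle_trans; [apply cdist_le_abs|]. rewrite TR. unfold vR.
    destruct HsR as [E|E]; rewrite E; unfold Rabs; destruct (Rcase_abs _); lra. }
  unfold circ_pt in Hy.
  assert (T1 := cdist_tri vL (T (pL - mL)) vR HvL BL HvR).
  assert (T2 := cdist_tri (T (pL - mL)) y vR BL ltac:(lra) HvR).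
  assert (T3 := cdist_tri y (T (pR + mR)) vR ltac:(lra) BR HvR).
  rewrite cdist_sym in H2.
  fold d in T1. lra.
Qed.

Definition ee (e1 e2 e3 : R) (i : nat) : R :=
  match i with 0 => 0 | 1 => e1 | 2 => e2 | 3 => e3 | _ => 1 end.
Definition ll (e1 e2 e3 : R) (i : nat) : R := ee e1 e2 e3 (S i) - ee e1 e2 e3 i.
Definition ss (fl : nat -> bool) (i : nat) : R := if fl i then -1 else 1.
Definition idx (e1 e2 e3 x : R) : nat :=
  if Rlt_dec x e1 then 0%nat else if Rlt_dec x e2 then 1%nat
  else if Rlt_dec x e3 then 2%nat else 3%nat.
Definition TT (e1 e2 e3 : R) (c : nat -> R) (fl : nat -> bool) (x : R) : R :=
  c (idx e1 e2 e3 x) + ss fl (idx e1 e2 e3 x) * x.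

Lemma arc_iff a l x : 0 <= a -> 0 < l -> a + l <= 1 -> (arc a l x <-> a < x < a + l).
Proof.
  intros H1 H2 H3. unfold arc. split.
  - intros [t [Ht E]]. rewrite frac_id in E by lra. lra.
  - intros Hx. exists (x - a). split; [lra|]. rewrite frac_id; [ring|lra].
Qed.

Lemma ss_pm fl i : ss fl i = 1 \/ ss fl i = -1.
Proof. unfold ss. destruct (fl i); auto. Qed.

Section Tmpl.
Variables (e1 e2 e3 : R) (c : nat -> R) (fl : nat -> bool).
Hypothesis Hord : 0 < e1 /\ e1 < e2 /\ e2 < e3 /\ e3 < 1.
Let e := ee e1 e2 e3.
Let T := TT e1 e2 e3 c fl.

Lemma ee_props i : (i < 4)%nat -> 0 <= e i /\ e i < e (S i) /\ e (S i) <= 1.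
Proof. intros Hi. unfold e. destruct i as [|[|[|[|i]]]]; simpl; try lra; lia. Qed.

Lemma arc_e i x : (i < 4)%nat -> (arc (e i) (ll e1 e2 e3 i) x <-> e i < x < e (S i)).
Proof.
  intros Hi. destruct (ee_props i Hi) as [H1 [H2 H3]].
  unfold ll. fold e. rewrite arc_iff by lra.
  replace (e i + (e (S i) - e i)) with (e (S i)) by ring. tauto.
Qed.

Lemma Dom_e x : Dom 4 e (ll e1 e2 e3) x <-> exists i, (i < 4)%nat /\ e i < x < e (S i).
Proof.
  unfold Dom. split; intros [i [Hi H]]; exists i; split; auto; apply (arc_e i x Hi); auto.
Qed.

Lemma T_on i x : (i < 4)%nat -> e i < x < e (S i) -> T x = c i + ss fl i * x.
Proof.
  intros Hi Hx. unfold T, TT, idx. unfold e in Hx.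
  destruct i as [|[|[|[|i]]]]; simpl in Hx; try lia;
  repeat (destruct (Rlt_dec _ _)); try reflexivity; lra.
Qed.

Hypothesis Himg : forall i, (i < 4)%nat ->
  0 <= c i + ss fl i * e i <= 1 /\ 0 <= c i + ss fl i * e (S i) <= 1.

Lemma T_range i x : (i < 4)%nat -> e i < x < e (S i) -> 0 < T x < 1.
Proof.
  intros Hi Hx. rewrite (T_on i x Hi Hx). destruct (Himg i Hi) as [A B].
  destruct (ss_pm fl i) as [E|E]; rewrite E in *; lra.
Qed.

Hypothesis Hdisj : forall i j x y, (i < 4)%nat -> (j < 4)%nat -> i <> j ->
  e i < x < e (S i) -> e j < y < e (S j) -> c i + ss fl i * x <> c j + ss fl j * y.

Hypothesis Hext0 : 0 < Rabs ((c 3%nat + ss fl 3 * 1) - (c 0%nat + ss fl 0 * 0)) < 1.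
Hypothesis Hext : forall k, (1 <= k < 4)%nat ->
  0 < Rabs ((c (k-1)%nat + ss fl (k-1) * e k) - (c k + ss fl k * e k)) < 1.

Lemma not_rev i : (i < 4)%nat -> fl i = false -> ~ reverses (e i) (ll e1 e2 e3 i) T.
Proof.
  intros Hi Hf [c' Hc]. destruct (ee_props i Hi) as [H1 [H2 H3]].
  unfold ll in Hc. fold e in Hc.
  set (L := e (S i) - e i) in *.
  assert (HL : 0 < L /\ L <= 1) by (unfold L; lra).
  assert (Hf1 : forall t, 0 < t < L -> frac_part (c i + e i + t) = frac_part (c' - t)).
  { intros t Ht. rewrite <- Hc by exact Ht.
    assert (Hx : e i < e i + t < e (S i)) by (unfold L in Ht; lra).
    rewrite (frac_id (e i + t)) by lra.
    rewrite (T_on i _ Hi Hx). unfold ss. rewrite Hf.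
    pose proof (T_range i _ Hi Hx) as Hr. rewrite (T_on i _ Hi Hx) in Hr.
    unfold ss in Hr. rewrite Hf in Hr. rewrite frac_id; lra. }
  destruct (frac_diff _ _ (Hf1 (L/4) ltac:(lra))) as [z1 E1].
  destruct (frac_diff _ _ (Hf1 (L/2) ltac:(lra))) as [z2 E2].
  apply (IZR_not_01 (z2 - z1)). rewrite minus_IZR. unfold L in *. lra.
Qed.

Lemma rev_or_pres i : (i < 4)%nat ->
  (fl i = true -> reverses (e i) (ll e1 e2 e3 i) T) /\
  (fl i = false -> preserves (e i) (ll e1 e2 e3 i) T).
Proof.
  intros Hi. destruct (ee_props i Hi) as [H1 [H2 H3]].
  split; intros Hf.
  - exists (c i - e i). intros t Ht. unfold ll in Ht. fold e in Ht.
    rewrite frac_id by lra.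
    assert (Hx : e i < e i + t < e (S i)) by lra.
    pose proof (T_range i _ Hi Hx) as Hr.
    rewrite (T_on i _ Hi Hx) in *. unfold ss in *. rewrite Hf in *.
    rewrite frac_id; [ring|lra].
  - exists (c i + e i). intros t Ht. unfold ll in Ht. fold e in Ht.
    rewrite frac_id by lra.
    assert (Hx : e i < e i + t < e (S i)) by lra.
    pose proof (T_range i _ Hi Hx) as Hr.
    rewrite (T_on i _ Hi Hx) in *. unfold ss in *. rewrite Hf in *.
    rewrite frac_id; [ring|lra].
Qed.

Lemma tmpl_flips : forall i, (i < 4)%nat -> (fl i = true <-> reverses (e i) (ll e1 e2 e3 i) T).
Proof.
  intros i Hi. destruct (rev_or_pres i Hi) as [A B]. split; [exact A|].
  intros Hr. destruct (fl i) eqn:E; [reflexivity|].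
  exfalso. exact (not_rev i Hi E Hr).
Qed.

Lemma side_info i z : (i < 4)%nat -> e i < z < e (S i) ->
  Dom 4 e (ll e1 e2 e3) z /\ T z = c i + ss fl i * z /\ 0 <= T z <= 1.
Proof.
  intros Hi Hz. split; [apply Dom_e; exists i; auto|].
  split; [apply T_on; auto|]. pose proof (T_range i z Hi Hz). lra.
Qed.

Lemma abs_cdist a b : 0 < Rabs (a - b) < 1 -> 0 < cdist a b.
Proof. apply cdist_pos. Qed.

Lemma tmpl_CET : is_CET 4 e (ll e1 e2 e3) T.
Proof.
  split; [|split; [|split; [|split; [|split]]]].
  - intros i Hi. destruct (ee_props i Hi) as [H1 [H2 H3]]. unfold open_arc, ll. fold e.
    lra.
  - intros i j x Hi Hj Hij Ai Aj. apply (arc_e i x Hi) in Ai. apply (arc_e j x Hj) in Aj.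
    unfold e in *.
    destruct i as [|[|[|[|i]]]]; destruct j as [|[|[|[|j]]]]; simpl in *; try lia; lra.
  - intros x [Hx0 Hx1].
    assert (Hex : exists i, (i < 4)%nat /\ e i <= x <= e (S i)).
    { unfold e. simpl.
      destruct (Rle_dec x e1); [exists 0%nat; simpl; split; [lia|lra]|].
      destruct (Rle_dec x e2); [exists 1%nat; simpl; split; [lia|lra]|].
      destruct (Rle_dec x e3); [exists 2%nat; simpl; split; [lia|lra]|].
      exists 3%nat; simpl; split; [lia|lra]. }
    destruct Hex as [i [Hi Hx]]. exists i. split; [exact Hi|].
    exists (x - e i). unfold ll. fold e. split; [lra|].
    rewrite frac_id; [ring|lra].
  - intros x y Hx Hy Hxy. apply Dom_e in Hx as [i [Hi Hx]]. apply Dom_e in Hy as [j [Hj Hy]].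
    rewrite (T_on i x Hi Hx), (T_on j y Hj Hy) in Hxy.
    destruct (Nat.eq_dec i j) as [E|E].
    + subst j. destruct (ss_pm fl i) as [S|S]; rewrite S in Hxy; lra.
    + exfalso. exact (Hdisj i j x y Hi Hj E Hx Hy Hxy).
  - intros i Hi. destruct (rev_or_pres i Hi) as [A B]. destruct (fl i).
    + right; auto.
    + left; auto.
  - intros p Hp HnD.
    assert (Hp4 : p = 0 \/ p = e1 \/ p = e2 \/ p = e3).
    { unfold circ_pt in Hp.
      destruct (Rtotal_order p 0) as [?|[?|?]]; [lra|left; auto|].
      destruct (Rtotal_order p e1) as [?|[?|?]];
        [exfalso; apply HnD, Dom_e; exists 0%nat; unfold e; simpl; split; [lia|lra]|right; left; auto|].
      destruct (Rtotal_order p e2) as [?|[?|?]];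
        [exfalso; apply HnD, Dom_e; exists 1%nat; unfold e; simpl; split; [lia|lra]|right; right; left; auto|].
      destruct (Rtotal_order p e3) as [?|[?|?]];
        [exfalso; apply HnD, Dom_e; exists 2%nat; unfold e; simpl; split; [lia|lra]|right; right; right; auto|].
      exfalso; apply HnD, Dom_e; exists 3%nat; unfold e; simpl; split; [lia|lra]. }
    destruct Hp4 as [E|[E|[E|E]]]; subst p.
    + pose proof (Himg 3%nat ltac:(lia)) as I3. pose proof (Himg 0%nat ltac:(lia)) as I0.
      unfold e in I3, I0; simpl in I3, I0.
      apply (noext _ _ 0 e3 1 0 e1 (c 3%nat) (ss fl 3) (c 0%nat) (ss fl 0));
        try lra; try apply ss_pm.
      * intros z Hz. destruct (side_info 3 z ltac:(lia) ltac:(unfold e; simpl; lra))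
          as [A [B C]]. repeat split; auto; try lra.
        unfold cdist. eapply Rle_trans; [apply Rmin_r|]. unfold Rabs; destruct (Rcase_abs _); lra.
      * intros z Hz. destruct (side_info 0 z ltac:(lia) ltac:(unfold e; simpl; lra))
          as [A [B C]]. repeat split; auto; try lra.
        unfold cdist. eapply Rle_trans; [apply Rmin_l|]. unfold Rabs; destruct (Rcase_abs _); lra.
      * apply abs_cdist. exact Hext0.
    + pose proof (Himg 0%nat ltac:(lia)) as I0. pose proof (Himg 1%nat ltac:(lia)) as I1.
      pose proof (Hext 1%nat ltac:(lia)) as HX. unfold e in I0, I1, HX; simpl in I0, I1, HX.
      apply (noext _ _ e1 0 e1 e1 e2 (c 0%nat) (ss fl 0) (c 1%nat) (ss fl 1));
        try lra; try apply ss_pm.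
      * intros z Hz. destruct (side_info 0 z ltac:(lia) ltac:(unfold e; simpl; lra))
          as [A [B C]]. repeat split; auto; try lra.
        eapply Rle_trans; [apply cdist_le_abs|]. unfold Rabs; destruct (Rcase_abs _); lra.
      * intros z Hz. destruct (side_info 1 z ltac:(lia) ltac:(unfold e; simpl; lra))
          as [A [B C]]. repeat split; auto; try lra.
        eapply Rle_trans; [apply cdist_le_abs|]. unfold Rabs; destruct (Rcase_abs _); lra.
      * apply abs_cdist. exact HX.
    + pose proof (Himg 1%nat ltac:(lia)) as I0. pose proof (Himg 2%nat ltac:(lia)) as I1.
      pose proof (Hext 2%nat ltac:(lia)) as HX. unfold e in I0, I1, HX; simpl in I0, I1, HX.
      apply (noext _ _ e2 e1 e2 e2 e3 (c 1%nat) (ss fl 1) (c 2%nat) (ss fl 2));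
        try lra; try apply ss_pm.
      * intros z Hz. destruct (side_info 1 z ltac:(lia) ltac:(unfold e; simpl; lra))
          as [A [B C]]. repeat split; auto; try lra.
        eapply Rle_trans; [apply cdist_le_abs|]. unfold Rabs; destruct (Rcase_abs _); lra.
      * intros z Hz. destruct (side_info 2 z ltac:(lia) ltac:(unfold e; simpl; lra))
          as [A [B C]]. repeat split; auto; try lra.
        eapply Rle_trans; [apply cdist_le_abs|]. unfold Rabs; destruct (Rcase_abs _); lra.
      * apply abs_cdist. exact HX.
    + pose proof (Himg 2%nat ltac:(lia)) as I0. pose proof (Himg 3%nat ltac:(lia)) as I1.
      pose proof (Hext 3%nat ltac:(lia)) as HX. unfold e in I0, I1, HX; simpl in I0, I1, HX.
      apply (noext _ _ e3 e2 e3 e3 1 (c 2%nat) (ss fl 2) (c 3%nat) (ss fl 3));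
        try lra; try apply ss_pm.
      * intros z Hz. destruct (side_info 2 z ltac:(lia) ltac:(unfold e; simpl; lra))
          as [A [B C]]. repeat split; auto; try lra.
        eapply Rle_trans; [apply cdist_le_abs|]. unfold Rabs; destruct (Rcase_abs _); lra.
      * intros z Hz. destruct (side_info 3 z ltac:(lia) ltac:(unfold e; simpl; lra))
          as [A [B C]]. repeat split; auto; try lra.
        eapply Rle_trans; [apply cdist_le_abs|]. unfold Rabs; destruct (Rcase_abs _); lra.
      * apply abs_cdist. exact HX.
Qed.

End Tmpl.


Lemma lev n a l T (L : R) j s0 w cc sg y eps :
  0 <= s0 -> 0 < w -> s0 + w <= L -> (sg = 1 \/ sg = -1) ->
  (forall x, s0 < x < s0 + w -> iter_def n a l T j x (cc + sg * x)) -> 0 < eps ->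
  s0 <= sg * (y - cc) <= s0 + w ->
  exists j u v, 0 <= u < v /\ v <= L /\
     forall x, u < x < v -> exists q, iter_def n a l T j x q /\ cdist q y < eps.
Proof.
  intros H0 Hw HL Hsg Hit Heps Ht.
  set (t := sg * (y - cc)) in *.
  assert (Hy : y = cc + sg * t) by (unfold t; destruct Hsg as [E|E]; rewrite E; ring).
  assert (Hq : forall x, Rabs (x - t) < eps/2 -> cdist (cc + sg * x) y < eps).
  { intros x Hx. eapply Rle_lt_trans; [apply cdist_le_abs|]. rewrite Hy.
    replace (cc + sg * x - (cc + sg * t)) with (sg * (x - t)) by ring.
    destruct Hsg as [E|E]; rewrite E; revert Hx; unfold Rabs;
      repeat (destruct (Rcase_abs _)); lra. }
  exists j.
  destruct (Rlt_dec t (s0 + w)) as [Hlt|Hge].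
  - exists t, (Rmin (s0 + w) (t + eps/2)). pose proof (Rmin_l (s0 + w) (t + eps/2)).
    pose proof (Rmin_r (s0 + w) (t + eps/2)).
    assert (t < Rmin (s0 + w) (t + eps/2)) by (apply Rmin_glb_lt; lra).
    split; [lra|]. split; [lra|].
    intros x Hx. exists (cc + sg * x). split; [apply Hit; lra|].
    apply Hq. unfold Rabs; destruct (Rcase_abs _); lra.
  - exists (Rmax s0 (t - eps/2)), t. pose proof (Rmax_l s0 (t - eps/2)).
    pose proof (Rmax_r s0 (t - eps/2)).
    assert (Rmax s0 (t - eps/2) < t) by (apply Rmax_lub_lt; lra).
    split; [lra|]. split; [lra|].
    intros x Hx. exists (cc + sg * x). split; [apply Hit; lra|].
    apply Hq. unfold Rabs; destruct (Rcase_abs _); lra.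
Qed.

Lemma step e1 e2 e3 c fl (Hord : 0 < e1 /\ e1 < e2 /\ e2 < e3 /\ e3 < 1) i x j q :
  (i < 4)%nat -> ee e1 e2 e3 i < x < ee e1 e2 e3 (S i) ->
  iter_def 4 (ee e1 e2 e3) (ll e1 e2 e3) (TT e1 e2 e3 c fl) j (c i + ss fl i * x) q ->
  iter_def 4 (ee e1 e2 e3) (ll e1 e2 e3) (TT e1 e2 e3 c fl) (S j) x q.
Proof.
  intros Hi Hx H. simpl. split.
  - apply (Dom_e e1 e2 e3 c fl Hord). exists i. auto.
  - rewrite (T_on e1 e2 e3 c fl Hord i x Hi Hx). exact H.
Qed.


Definition cF1 (i : nat) : R := match i with 0 => 3/4 - (1 - gg)/4 | 1 => 1/2 - (1 - gg)/4 | 2 => 1/2 | _ => 1 end.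
Definition flF1 (i : nat) : bool := match i with 0 => false | 1 => false | 2 => false | _ => true end.
Lemma ordF1 : 0 < (1 - gg)/4 /\ (1 - gg)/4 < 1/4 /\ 1/4 < 1/2 /\ 1/2 < 1.
Proof. pose proof gg_facts as [_ Hg]. lra. Qed.
Ltac stpF1 i := apply (step _ _ _ _ _ ordF1 i); [lia | cbv beta iota delta [ss ee cF1 flF1]; lra | ].
Ltac pathF1 := repeat (first [stpF1 0%nat|stpF1 1%nat|stpF1 2%nat|stpF1 3%nat]); simpl; cbv beta iota delta [ss ee cF1 flF1]; lra.
Lemma LA0_F1 : forall x, 0 < x < 0 + ((1 - gg)/4) -> iter_def 4 (ee ((1 - gg)/4) (1/4) (1/2)) (ll ((1 - gg)/4) (1/4) (1/2)) (TT ((1 - gg)/4) (1/4) (1/2) cF1 flF1) 0 x ((0) + (1) * x).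
Proof. intros x Hx. pose proof gg_facts as [_ Hg]. pathF1. Qed.
Lemma LA1_F1 : forall x, 0 < x < 0 + ((1 - gg)/4) -> iter_def 4 (ee ((1 - gg)/4) (1/4) (1/2)) (ll ((1 - gg)/4) (1/4) (1/2)) (TT ((1 - gg)/4) (1/4) (1/2) cF1 flF1) 1 x ((3/4 - (1 - gg)/4) + (1) * x).
Proof. intros x Hx. pose proof gg_facts as [_ Hg]. pathF1. Qed.
Lemma LA2_F1 : forall x, 0 < x < 0 + ((1 - gg)/4) -> iter_def 4 (ee ((1 - gg)/4) (1/4) (1/2)) (ll ((1 - gg)/4) (1/4) (1/2)) (TT ((1 - gg)/4) (1/4) (1/2) cF1 flF1) 2 x ((1/4 + (1 - gg)/4) + (-1) * x).
Proof. intros x Hx. pose proof gg_facts as [_ Hg]. pathF1. Qed.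
Lemma LA3_F1 : forall x, 0 < x < 0 + ((1 - gg)/4) -> iter_def 4 (ee ((1 - gg)/4) (1/4) (1/2)) (ll ((1 - gg)/4) (1/4) (1/2)) (TT ((1 - gg)/4) (1/4) (1/2) cF1 flF1) 3 x ((3/4 + (1 - gg)/4) + (-1) * x).
Proof. intros x Hx. pose proof gg_facts as [_ Hg]. pathF1. Qed.
Lemma LA_F1 : forall x, 0 < x < 0 + ((1 - gg)/4) -> exists h, iter_def 4 (ee ((1 - gg)/4) (1/4) (1/2)) (ll ((1 - gg)/4) (1/4) (1/2)) (TT ((1 - gg)/4) (1/4) (1/2) cF1 flF1) h x (x + gg * (1/4)).
Proof. intros x Hx. pose proof gg_facts as [_ Hg]. exists 4%nat. pathF1. Qed.
Lemma LB0_F1 : forall x, (1 - gg)/4 < x < (1 - gg)/4 + (1/4 - ((1 - gg)/4)) -> iter_def 4 (ee ((1 - gg)/4) (1/4) (1/2)) (ll ((1 - gg)/4) (1/4) (1/2)) (TT ((1 - gg)/4) (1/4) (1/2) cF1 flF1) 0 x ((0) + (1) * x).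
Proof. intros x Hx. pose proof gg_facts as [_ Hg]. pathF1. Qed.
Lemma LB1_F1 : forall x, (1 - gg)/4 < x < (1 - gg)/4 + (1/4 - ((1 - gg)/4)) -> iter_def 4 (ee ((1 - gg)/4) (1/4) (1/2)) (ll ((1 - gg)/4) (1/4) (1/2)) (TT ((1 - gg)/4) (1/4) (1/2) cF1 flF1) 1 x ((1/2 - (1 - gg)/4) + (1) * x).
Proof. intros x Hx. pose proof gg_facts as [_ Hg]. pathF1. Qed.
Lemma LB2_F1 : forall x, (1 - gg)/4 < x < (1 - gg)/4 + (1/4 - ((1 - gg)/4)) -> iter_def 4 (ee ((1 - gg)/4) (1/4) (1/2)) (ll ((1 - gg)/4) (1/4) (1/2)) (TT ((1 - gg)/4) (1/4) (1/2) cF1 flF1) 2 x ((1/2 + (1 - gg)/4) + (-1) * x).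
Proof. intros x Hx. pose proof gg_facts as [_ Hg]. pathF1. Qed.
Lemma LB3_F1 : forall x, (1 - gg)/4 < x < (1 - gg)/4 + (1/4 - ((1 - gg)/4)) -> iter_def 4 (ee ((1 - gg)/4) (1/4) (1/2)) (ll ((1 - gg)/4) (1/4) (1/2)) (TT ((1 - gg)/4) (1/4) (1/2) cF1 flF1) 3 x ((1 + (1 - gg)/4) + (-1) * x).
Proof. intros x Hx. pose proof gg_facts as [_ Hg]. pathF1. Qed.
Lemma LB_F1 : forall x, (1 - gg)/4 < x < (1 - gg)/4 + (1/4 - ((1 - gg)/4)) -> exists h, iter_def 4 (ee ((1 - gg)/4) (1/4) (1/2)) (ll ((1 - gg)/4) (1/4) (1/2)) (TT ((1 - gg)/4) (1/4) (1/2) cF1 flF1) h x (x - ((1 - gg)/4)).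
Proof. intros x Hx. pose proof gg_facts as [_ Hg]. exists 4%nat. pathF1. Qed.
Lemma coverF1 : forall y, circ_pt y -> forall eps, 0 < eps -> exists j u v, 0 <= u < v /\ v <= 1/4 /\
     forall x, u < x < v -> exists q, iter_def 4 (ee ((1 - gg)/4) (1/4) (1/2)) (ll ((1 - gg)/4) (1/4) (1/2)) (TT ((1 - gg)/4) (1/4) (1/2) cF1 flF1) j x q /\ cdist q y < eps.
Proof.
  intros y Hy eps Heps. unfold circ_pt in Hy. pose proof gg_facts as [_ Hg].
  (destruct (Rle_dec y ((0) + (1)*((0) + ((1 - gg)/4)))); [(apply (lev _ _ _ _ (1/4) 0%nat (0) ((1 - gg)/4) (0) (1) y eps); [lra|lra|lra|lra|exact LA0_F1|exact Heps|lra])| (destruct (Rle_dec y ((0) + (1)*(((1 - gg)/4) + (1/4 - ((1 - gg)/4))))); [(apply (lev _ _ _ _ (1/4) 0%nat ((1 - gg)/4) (1/4 - ((1 - gg)/4)) (0) (1) y eps); [lra|lra|lra|lra|exact LB0_F1|exact Heps|lra])| (destruct (Rle_dec y ((1/4 + (1 - gg)/4) + (-1)*(0))); [(apply (lev _ _ _ _ (1/4) 2%nat (0) ((1 - gg)/4) (1/4 + (1 - gg)/4) (-1) y eps); [lra|lra|lra|lra|exact LA2_F1|exact Heps|lra])| (destruct (Rle_dec y ((1/2 + (1 - gg)/4) + (-1)*((1 - gg)/4))); [(apply (lev _ _ _ _ (1/4) 2%nat ((1 - gg)/4) (1/4 - ((1 - gg)/4)) (1/2 + (1 - gg)/4) (-1)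 y eps); [lra|lra|lra|lra|exact LB2_F1|exact Heps|lra])| (destruct (Rle_dec y ((1/2 - (1 - gg)/4) + (1)*(((1 - gg)/4) + (1/4 - ((1 - gg)/4))))); [(apply (lev _ _ _ _ (1/4) 1%nat ((1 - gg)/4) (1/4 - ((1 - gg)/4)) (1/2 - (1 - gg)/4) (1) y eps); [lra|lra|lra|lra|exact LB1_F1|exact Heps|lra])| (destruct (Rle_dec y ((3/4 - (1 - gg)/4) + (1)*((0) + ((1 - gg)/4)))); [(apply (lev _ _ _ _ (1/4) 1%nat (0) ((1 - gg)/4) (3/4 - (1 - gg)/4) (1) y eps); [lra|lra|lra|lra|exact LA1_F1|exact Heps|lra])| (destruct (Rle_dec y ((3/4 + (1 - gg)/4) + (-1)*(0))); [(apply (lev _ _ _ _ (1/4) 3%nat (0) ((1 - gg)/4) (3/4 + (1 - gg)/4) (-1) y eps); [lra|lra|lra|lra|exact LA3_F1|exact Heps|lra])| (destruct (Rle_dec y ((1 + (1 - gg)/4) + (-1)*((1 - gg)/4))); [(apply (lev _ _ _ _ (1/4) 3%nat ((1 - gg)/4) (1/4 - ((1 - gg)/4)) (1 + (1 - gg)/4) (-1) y eps); [lra|lra|lra|lra|exact LB3_F1|exact Heps|lra])| lra])])])])])])])]).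
Qed.
Lemma inF1 : in_C 4 1 (ee ((1 - gg)/4) (1/4) (1/2)) (ll ((1 - gg)/4) (1/4) (1/2)) (TT ((1 - gg)/4) (1/4) (1/2) cF1 flF1).
Proof.
  pose proof gg_facts as [_ Hg].
  assert (Himg : forall i, (i < 4)%nat -> 0 <= cF1 i + ss flF1 i * ee ((1 - gg)/4) (1/4) (1/2) i <= 1 /\
      0 <= cF1 i + ss flF1 i * ee ((1 - gg)/4) (1/4) (1/2) (S i) <= 1).
  { intros i Hi. destruct i as [|[|[|[|i]]]]; try lia; cbv beta iota delta [ss ee cF1 flF1]; lra. }
  split; [|split].
  - apply tmpl_CET.
    + exact ordF1.
    + exact Himg.
    + intros i j x y Hi Hj Hij Hx Hy'. destruct i as [|[|[|[|i]]]]; destruct j as [|[|[|[|j]]]];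
        try lia; cbv beta iota delta [ss ee cF1 flF1] in *; intro; lra.
    + cbv beta iota delta [ss ee cF1 flF1]. unfold Rabs; destruct (Rcase_abs _); lra.
    + intros k Hk. destruct k as [|[|[|[|k]]]]; try lia; simpl Nat.sub; cbv beta iota delta [ss ee cF1 flF1];
        unfold Rabs; destruct (Rcase_abs _); lra.
  - apply (trans_gen _ _ _ _ (1/4) ((1 - gg)/4)); [lra|lra|intros x Hx; apply LA_F1; lra|intros x Hx; apply LB_F1; lra|exact coverF1].
  - exists flF1. split; [apply tmpl_flips; [exact ordF1|exact Himg]| reflexivity].
Qed.

Definition cF4 (i : nat) : R := match i with 0 => 1/2 + (1 - gg)/4 | 1 => 3/4 + (1 - gg)/4 | 2 => 5/4 | _ => 1 end.
Definition flF4 (i : nat) : bool := match i with 0 => true | 1 => true | 2 => true | _ => true end.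
Lemma ordF4 : 0 < (1 - gg)/4 /\ (1 - gg)/4 < 1/4 /\ 1/4 < 1/2 /\ 1/2 < 1.
Proof. pose proof gg_facts as [_ Hg]. lra. Qed.
Ltac stpF4 i := apply (step _ _ _ _ _ ordF4 i); [lia | cbv beta iota delta [ss ee cF4 flF4]; lra | ].
Ltac pathF4 := repeat (first [stpF4 0%nat|stpF4 1%nat|stpF4 2%nat|stpF4 3%nat]); simpl; cbv beta iota delta [ss ee cF4 flF4]; lra.
Lemma LA0_F4 : forall x, 0 < x < 0 + ((1 - gg)/4) -> iter_def 4 (ee ((1 - gg)/4) (1/4) (1/2)) (ll ((1 - gg)/4) (1/4) (1/2)) (TT ((1 - gg)/4) (1/4) (1/2) cF4 flF4) 0 x ((0) + (1) * x).
Proof. intros x Hx. pose proof gg_facts as [_ Hg]. pathF4. Qed.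
Lemma LA1_F4 : forall x, 0 < x < 0 + ((1 - gg)/4) -> iter_def 4 (ee ((1 - gg)/4) (1/4) (1/2)) (ll ((1 - gg)/4) (1/4) (1/2)) (TT ((1 - gg)/4) (1/4) (1/2) cF4 flF4) 1 x ((1/2 + (1 - gg)/4) + (-1) * x).
Proof. intros x Hx. pose proof gg_facts as [_ Hg]. pathF4. Qed.
Lemma LA2_F4 : forall x, 0 < x < 0 + ((1 - gg)/4) -> iter_def 4 (ee ((1 - gg)/4) (1/4) (1/2)) (ll ((1 - gg)/4) (1/4) (1/2)) (TT ((1 - gg)/4) (1/4) (1/2) cF4 flF4) 2 x ((1/2 - (1 - gg)/4) + (1) * x).
Proof. intros x Hx. pose proof gg_facts as [_ Hg]. pathF4. Qed.
Lemma LA3_F4 : forall x, 0 < x < 0 + ((1 - gg)/4) -> iter_def 4 (ee ((1 - gg)/4) (1/4) (1/2)) (ll ((1 - gg)/4) (1/4) (1/2)) (TT ((1 - gg)/4) (1/4) (1/2) cF4 flF4) 3 x ((3/4 + (1 - gg)/4) + (-1) * x).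
Proof. intros x Hx. pose proof gg_facts as [_ Hg]. pathF4. Qed.
Lemma LA_F4 : forall x, 0 < x < 0 + ((1 - gg)/4) -> exists h, iter_def 4 (ee ((1 - gg)/4) (1/4) (1/2)) (ll ((1 - gg)/4) (1/4) (1/2)) (TT ((1 - gg)/4) (1/4) (1/2) cF4 flF4) h x (x + gg * (1/4)).
Proof. intros x Hx. pose proof gg_facts as [_ Hg]. exists 4%nat. pathF4. Qed.
Lemma LB0_F4 : forall x, (1 - gg)/4 < x < (1 - gg)/4 + (1/4 - ((1 - gg)/4)) -> iter_def 4 (ee ((1 - gg)/4) (1/4) (1/2)) (ll ((1 - gg)/4) (1/4) (1/2)) (TT ((1 - gg)/4) (1/4) (1/2) cF4 flF4) 0 x ((0) + (1) * x).
Proof. intros x Hx. pose proof gg_facts as [_ Hg]. pathF4. Qed.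
Lemma LB1_F4 : forall x, (1 - gg)/4 < x < (1 - gg)/4 + (1/4 - ((1 - gg)/4)) -> iter_def 4 (ee ((1 - gg)/4) (1/4) (1/2)) (ll ((1 - gg)/4) (1/4) (1/2)) (TT ((1 - gg)/4) (1/4) (1/2) cF4 flF4) 1 x ((3/4 + (1 - gg)/4) + (-1) * x).
Proof. intros x Hx. pose proof gg_facts as [_ Hg]. pathF4. Qed.
Lemma LB2_F4 : forall x, (1 - gg)/4 < x < (1 - gg)/4 + (1/4 - ((1 - gg)/4)) -> iter_def 4 (ee ((1 - gg)/4) (1/4) (1/2)) (ll ((1 - gg)/4) (1/4) (1/2)) (TT ((1 - gg)/4) (1/4) (1/2) cF4 flF4) 2 x ((1/4 - (1 - gg)/4) + (1) * x).
Proof. intros x Hx. pose proof gg_facts as [_ Hg]. pathF4. Qed.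
Lemma LB3_F4 : forall x, (1 - gg)/4 < x < (1 - gg)/4 + (1/4 - ((1 - gg)/4)) -> iter_def 4 (ee ((1 - gg)/4) (1/4) (1/2)) (ll ((1 - gg)/4) (1/4) (1/2)) (TT ((1 - gg)/4) (1/4) (1/2) cF4 flF4) 3 x ((1 + (1 - gg)/4) + (-1) * x).
Proof. intros x Hx. pose proof gg_facts as [_ Hg]. pathF4. Qed.
Lemma LB_F4 : forall x, (1 - gg)/4 < x < (1 - gg)/4 + (1/4 - ((1 - gg)/4)) -> exists h, iter_def 4 (ee ((1 - gg)/4) (1/4) (1/2)) (ll ((1 - gg)/4) (1/4) (1/2)) (TT ((1 - gg)/4) (1/4) (1/2) cF4 flF4) h x (x - ((1 - gg)/4)).
Proof. intros x Hx. pose proof gg_facts as [_ Hg]. exists 4%nat. pathF4. Qed.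
Lemma coverF4 : forall y, circ_pt y -> forall eps, 0 < eps -> exists j u v, 0 <= u < v /\ v <= 1/4 /\
     forall x, u < x < v -> exists q, iter_def 4 (ee ((1 - gg)/4) (1/4) (1/2)) (ll ((1 - gg)/4) (1/4) (1/2)) (TT ((1 - gg)/4) (1/4) (1/2) cF4 flF4) j x q /\ cdist q y < eps.
Proof.
  intros y Hy eps Heps. unfold circ_pt in Hy. pose proof gg_facts as [_ Hg].
  (destruct (Rle_dec y ((0) + (1)*((0) + ((1 - gg)/4)))); [(apply (lev _ _ _ _ (1/4) 0%nat (0) ((1 - gg)/4) (0) (1) y eps); [lra|lra|lra|lra|exact LA0_F4|exact Heps|lra])| (destruct (Rle_dec y ((0) + (1)*(((1 - gg)/4) + (1/4 - ((1 - gg)/4))))); [(apply (lev _ _ _ _ (1/4) 0%nat ((1 - gg)/4) (1/4 - ((1 - gg)/4)) (0) (1) y eps); [lra|lra|lra|lra|exact LB0_F4|exact Heps|lra])| (destruct (Rle_dec y ((1/4 - (1 - gg)/4) + (1)*(((1 - gg)/4) + (1/4 - ((1 - gg)/4))))); [(apply (lev _ _ _ _ (1/4) 2%nat ((1 - gg)/4) (1/4 - ((1 - gg)/4)) (1/4 - (1 - gg)/4) (1) y eps); [lra|lra|lra|lra|exact LB2_F4|exact Heps|lra])| (destruct (Rle_dec y ((1/2 - (1 - gg)/4) + (1)*((0) + ((1 - gg)/4)))); [(apply (lev _ _ _ _ (1/4) 2%nat (0) ((1 - gg)/4) (1/2 - (1 - gg)/4) (1) y eps); [lra|lra|lra|lra|exact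 LA2_F4|exact Heps|lra])| (destruct (Rle_dec y ((1/2 + (1 - gg)/4) + (-1)*(0))); [(apply (lev _ _ _ _ (1/4) 1%nat (0) ((1 - gg)/4) (1/2 + (1 - gg)/4) (-1) y eps); [lra|lra|lra|lra|exact LA1_F4|exact Heps|lra])| (destruct (Rle_dec y ((3/4 + (1 - gg)/4) + (-1)*((1 - gg)/4))); [(apply (lev _ _ _ _ (1/4) 1%nat ((1 - gg)/4) (1/4 - ((1 - gg)/4)) (3/4 + (1 - gg)/4) (-1) y eps); [lra|lra|lra|lra|exact LB1_F4|exact Heps|lra])| (destruct (Rle_dec y ((3/4 + (1 - gg)/4) + (-1)*(0))); [(apply (lev _ _ _ _ (1/4) 3%nat (0) ((1 - gg)/4) (3/4 + (1 - gg)/4) (-1) y eps); [lra|lra|lra|lra|exact LA3_F4|exact Heps|lra])| (destruct (Rle_dec y ((1 + (1 - gg)/4) + (-1)*((1 - gg)/4))); [(apply (lev _ _ _ _ (1/4) 3%nat ((1 - gg)/4) (1/4 - ((1 - gg)/4)) (1 + (1 - gg)/4) (-1) y eps); [lra|lra|lra|lra|exact LB3_F4|exact Heps|lra])| lra])])])])])])])]).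
Qed.
Lemma inF4 : in_C 4 4 (ee ((1 - gg)/4) (1/4) (1/2)) (ll ((1 - gg)/4) (1/4) (1/2)) (TT ((1 - gg)/4) (1/4) (1/2) cF4 flF4).
Proof.
  pose proof gg_facts as [_ Hg].
  assert (Himg : forall i, (i < 4)%nat -> 0 <= cF4 i + ss flF4 i * ee ((1 - gg)/4) (1/4) (1/2) i <= 1 /\
      0 <= cF4 i + ss flF4 i * ee ((1 - gg)/4) (1/4) (1/2) (S i) <= 1).
  { intros i Hi. destruct i as [|[|[|[|i]]]]; try lia; cbv beta iota delta [ss ee cF4 flF4]; lra. }
  split; [|split].
  - apply tmpl_CET.
    + exact ordF4.
    + exact Himg.
    + intros i j x y Hi Hj Hij Hx Hy'. destruct i as [|[|[|[|i]]]]; destruct j as [|[|[|[|j]]]];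
        try lia; cbv beta iota delta [ss ee cF4 flF4] in *; intro; lra.
    + cbv beta iota delta [ss ee cF4 flF4]. unfold Rabs; destruct (Rcase_abs _); lra.
    + intros k Hk. destruct k as [|[|[|[|k]]]]; try lia; simpl Nat.sub; cbv beta iota delta [ss ee cF4 flF4];
        unfold Rabs; destruct (Rcase_abs _); lra.
  - apply (trans_gen _ _ _ _ (1/4) ((1 - gg)/4)); [lra|lra|intros x Hx; apply LA_F4; lra|intros x Hx; apply LB_F4; lra|exact coverF4].
  - exists flF4. split; [apply tmpl_flips; [exact ordF4|exact Himg]| reflexivity].
Qed.

Definition cF3 (i : nat) : R := match i with 0 => 3/4 + (1 - gg)/4 | 1 => 1 + (1 - gg)/4 | 2 => 1 | _ => -1/2 end.
Definition flF3 (i : nat) : bool := match i with 0 => true | 1 => true | 2 => true | _ => false end.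
Lemma ordF3 : 0 < (1 - gg)/4 /\ (1 - gg)/4 < 1/4 /\ 1/4 < 1/2 /\ 1/2 < 1.
Proof. pose proof gg_facts as [_ Hg]. lra. Qed.
Ltac stpF3 i := apply (step _ _ _ _ _ ordF3 i); [lia | cbv beta iota delta [ss ee cF3 flF3]; lra | ].
Ltac pathF3 := repeat (first [stpF3 0%nat|stpF3 1%nat|stpF3 2%nat|stpF3 3%nat]); simpl; cbv beta iota delta [ss ee cF3 flF3]; lra.
Lemma LA0_F3 : forall x, 0 < x < 0 + ((1 - gg)/4) -> iter_def 4 (ee ((1 - gg)/4) (1/4) (1/2)) (ll ((1 - gg)/4) (1/4) (1/2)) (TT ((1 - gg)/4) (1/4) (1/2) cF3 flF3) 0 x ((0) + (1) * x).
Proof. intros x Hx. pose proof gg_facts as [_ Hg]. pathF3. Qed.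
Lemma LA1_F3 : forall x, 0 < x < 0 + ((1 - gg)/4) -> iter_def 4 (ee ((1 - gg)/4) (1/4) (1/2)) (ll ((1 - gg)/4) (1/4) (1/2)) (TT ((1 - gg)/4) (1/4) (1/2) cF3 flF3) 1 x ((3/4 + (1 - gg)/4) + (-1) * x).
Proof. intros x Hx. pose proof gg_facts as [_ Hg]. pathF3. Qed.
Lemma LA2_F3 : forall x, 0 < x < 0 + ((1 - gg)/4) -> iter_def 4 (ee ((1 - gg)/4) (1/4) (1/2)) (ll ((1 - gg)/4) (1/4) (1/2)) (TT ((1 - gg)/4) (1/4) (1/2) cF3 flF3) 2 x ((1/4 + (1 - gg)/4) + (-1) * x).
Proof. intros x Hx. pose proof gg_facts as [_ Hg]. pathF3. Qed.
Lemma LA3_F3 : forall x, 0 < x < 0 + ((1 - gg)/4) -> iter_def 4 (ee ((1 - gg)/4) (1/4) (1/2)) (ll ((1 - gg)/4) (1/4) (1/2)) (TT ((1 - gg)/4) (1/4) (1/2) cF3 flF3) 3 x ((3/4 - (1 - gg)/4) + (1) * x).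
Proof. intros x Hx. pose proof gg_facts as [_ Hg]. pathF3. Qed.
Lemma LA_F3 : forall x, 0 < x < 0 + ((1 - gg)/4) -> exists h, iter_def 4 (ee ((1 - gg)/4) (1/4) (1/2)) (ll ((1 - gg)/4) (1/4) (1/2)) (TT ((1 - gg)/4) (1/4) (1/2) cF3 flF3) h x (x + gg * (1/4)).
Proof. intros x Hx. pose proof gg_facts as [_ Hg]. exists 4%nat. pathF3. Qed.
Lemma LB0_F3 : forall x, (1 - gg)/4 < x < (1 - gg)/4 + (1/4 - ((1 - gg)/4)) -> iter_def 4 (ee ((1 - gg)/4) (1/4) (1/2)) (ll ((1 - gg)/4) (1/4) (1/2)) (TT ((1 - gg)/4) (1/4) (1/2) cF3 flF3) 0 x ((0) + (1) * x).
Proof. intros x Hx. pose proof gg_facts as [_ Hg]. pathF3. Qed.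
Lemma LB1_F3 : forall x, (1 - gg)/4 < x < (1 - gg)/4 + (1/4 - ((1 - gg)/4)) -> iter_def 4 (ee ((1 - gg)/4) (1/4) (1/2)) (ll ((1 - gg)/4) (1/4) (1/2)) (TT ((1 - gg)/4) (1/4) (1/2) cF3 flF3) 1 x ((1 + (1 - gg)/4) + (-1) * x).
Proof. intros x Hx. pose proof gg_facts as [_ Hg]. pathF3. Qed.
Lemma LB2_F3 : forall x, (1 - gg)/4 < x < (1 - gg)/4 + (1/4 - ((1 - gg)/4)) -> iter_def 4 (ee ((1 - gg)/4) (1/4) (1/2)) (ll ((1 - gg)/4) (1/4) (1/2)) (TT ((1 - gg)/4) (1/4) (1/2) cF3 flF3) 2 x ((1/2 + (1 - gg)/4) + (-1) * x).
Proof. intros x Hx. pose proof gg_facts as [_ Hg]. pathF3. Qed.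
Lemma LB3_F3 : forall x, (1 - gg)/4 < x < (1 - gg)/4 + (1/4 - ((1 - gg)/4)) -> iter_def 4 (ee ((1 - gg)/4) (1/4) (1/2)) (ll ((1 - gg)/4) (1/4) (1/2)) (TT ((1 - gg)/4) (1/4) (1/2) cF3 flF3) 3 x ((1/2 - (1 - gg)/4) + (1) * x).
Proof. intros x Hx. pose proof gg_facts as [_ Hg]. pathF3. Qed.
Lemma LB_F3 : forall x, (1 - gg)/4 < x < (1 - gg)/4 + (1/4 - ((1 - gg)/4)) -> exists h, iter_def 4 (ee ((1 - gg)/4) (1/4) (1/2)) (ll ((1 - gg)/4) (1/4) (1/2)) (TT ((1 - gg)/4) (1/4) (1/2) cF3 flF3) h x (x - ((1 - gg)/4)).
Proof. intros x Hx. pose proof gg_facts as [_ Hg]. exists 4%nat. pathF3. Qed.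
Lemma coverF3 : forall y, circ_pt y -> forall eps, 0 < eps -> exists j u v, 0 <= u < v /\ v <= 1/4 /\
     forall x, u < x < v -> exists q, iter_def 4 (ee ((1 - gg)/4) (1/4) (1/2)) (ll ((1 - gg)/4) (1/4) (1/2)) (TT ((1 - gg)/4) (1/4) (1/2) cF3 flF3) j x q /\ cdist q y < eps.
Proof.
  intros y Hy eps Heps. unfold circ_pt in Hy. pose proof gg_facts as [_ Hg].
  (destruct (Rle_dec y ((0) + (1)*((0) + ((1 - gg)/4)))); [(apply (lev _ _ _ _ (1/4) 0%nat (0) ((1 - gg)/4) (0) (1) y eps); [lra|lra|lra|lra|exact LA0_F3|exact Heps|lra])| (destruct (Rle_dec y ((0) + (1)*(((1 - gg)/4) + (1/4 - ((1 - gg)/4))))); [(apply (lev _ _ _ _ (1/4) 0%nat ((1 - gg)/4) (1/4 - ((1 - gg)/4)) (0) (1) y eps); [lra|lra|lra|lra|exact LB0_F3|exact Heps|lra])| (destruct (Rle_dec y ((1/4 + (1 - gg)/4) + (-1)*(0))); [(apply (lev _ _ _ _ (1/4) 2%nat (0) ((1 - gg)/4) (1/4 + (1 - gg)/4) (-1) y eps); [lra|lra|lra|lra|exact LA2_F3|exact Heps|lra])| (destruct (Rle_dec y ((1/2 + (1 - gg)/4) + (-1)*((1 - gg)/4))); [(apply (lev _ _ _ _ (1/4) 2%nat ((1 - gg)/4) (1/4 - ((1 - gg)/4)) (1/2 + (1 - gg)/4) (-1) y eps); [lra|lra|lra|lra|exact LB2_F3|exact Heps|lra])| (destruct (Rle_dec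 y ((1/2 - (1 - gg)/4) + (1)*(((1 - gg)/4) + (1/4 - ((1 - gg)/4))))); [(apply (lev _ _ _ _ (1/4) 3%nat ((1 - gg)/4) (1/4 - ((1 - gg)/4)) (1/2 - (1 - gg)/4) (1) y eps); [lra|lra|lra|lra|exact LB3_F3|exact Heps|lra])| (destruct (Rle_dec y ((3/4 - (1 - gg)/4) + (1)*((0) + ((1 - gg)/4)))); [(apply (lev _ _ _ _ (1/4) 3%nat (0) ((1 - gg)/4) (3/4 - (1 - gg)/4) (1) y eps); [lra|lra|lra|lra|exact LA3_F3|exact Heps|lra])| (destruct (Rle_dec y ((3/4 + (1 - gg)/4) + (-1)*(0))); [(apply (lev _ _ _ _ (1/4) 1%nat (0) ((1 - gg)/4) (3/4 + (1 - gg)/4) (-1) y eps); [lra|lra|lra|lra|exact LA1_F3|exact Heps|lra])| (destruct (Rle_dec y ((1 + (1 - gg)/4) + (-1)*((1 - gg)/4))); [(apply (lev _ _ _ _ (1/4) 1%nat ((1 - gg)/4) (1/4 - ((1 - gg)/4)) (1 + (1 - gg)/4) (-1) y eps); [lra|lra|lra|lra|exact LB1_F3|exact Heps|lra])| lra])])])])])])])]).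
Qed.
Lemma inF3 : in_C 4 3 (ee ((1 - gg)/4) (1/4) (1/2)) (ll ((1 - gg)/4) (1/4) (1/2)) (TT ((1 - gg)/4) (1/4) (1/2) cF3 flF3).
Proof.
  pose proof gg_facts as [_ Hg].
  assert (Himg : forall i, (i < 4)%nat -> 0 <= cF3 i + ss flF3 i * ee ((1 - gg)/4) (1/4) (1/2) i <= 1 /\
      0 <= cF3 i + ss flF3 i * ee ((1 - gg)/4) (1/4) (1/2) (S i) <= 1).
  { intros i Hi. destruct i as [|[|[|[|i]]]]; try lia; cbv beta iota delta [ss ee cF3 flF3]; lra. }
  split; [|split].
  - apply tmpl_CET.
    + exact ordF3.
    + exact Himg.
    + intros i j x y Hi Hj Hij Hx Hy'. destruct i as [|[|[|[|i]]]]; destruct j as [|[|[|[|j]]]];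
        try lia; cbv beta iota delta [ss ee cF3 flF3] in *; intro; lra.
    + cbv beta iota delta [ss ee cF3 flF3]. unfold Rabs; destruct (Rcase_abs _); lra.
    + intros k Hk. destruct k as [|[|[|[|k]]]]; try lia; simpl Nat.sub; cbv beta iota delta [ss ee cF3 flF3];
        unfold Rabs; destruct (Rcase_abs _); lra.
  - apply (trans_gen _ _ _ _ (1/4) ((1 - gg)/4)); [lra|lra|intros x Hx; apply LA_F3; lra|intros x Hx; apply LB_F3; lra|exact coverF3].
  - exists flF3. split; [apply tmpl_flips; [exact ordF3|exact Himg]| reflexivity].
Qed.

Definition cF2 (i : nat) : R := match i with 0 => 1/2 + (1 - gg)/2 | 1 => 1/2 | 2 => 1 | _ => -1/2 - (1 - gg)/2 end.
Definition flF2 (i : nat) : bool := match i with 0 => true | 1 => false | 2 => true | _ => false end.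
Lemma ordF2 : 0 < (1 - gg)/2 /\ (1 - gg)/2 < 1/2 /\ 1/2 < 1/2 + (1 - gg)/2 /\ 1/2 + (1 - gg)/2 < 1.
Proof. pose proof gg_facts as [_ Hg]. lra. Qed.
Ltac stpF2 i := apply (step _ _ _ _ _ ordF2 i); [lia | cbv beta iota delta [ss ee cF2 flF2]; lra | ].
Ltac pathF2 := repeat (first [stpF2 0%nat|stpF2 1%nat|stpF2 2%nat|stpF2 3%nat]); simpl; cbv beta iota delta [ss ee cF2 flF2]; lra.
Lemma LA0_F2 : forall x, 0 < x < 0 + ((1 - gg)/2) -> iter_def 4 (ee ((1 - gg)/2) (1/2) (1/2 + (1 - gg)/2)) (ll ((1 - gg)/2) (1/2) (1/2 + (1 - gg)/2)) (TT ((1 - gg)/2) (1/2) (1/2 + (1 - gg)/2) cF2 flF2) 0 x ((0) + (1) * x).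
Proof. intros x Hx. pose proof gg_facts as [_ Hg]. pathF2. Qed.
Lemma LA1_F2 : forall x, 0 < x < 0 + ((1 - gg)/2) -> iter_def 4 (ee ((1 - gg)/2) (1/2) (1/2 + (1 - gg)/2)) (ll ((1 - gg)/2) (1/2) (1/2 + (1 - gg)/2)) (TT ((1 - gg)/2) (1/2) (1/2 + (1 - gg)/2) cF2 flF2) 1 x ((1/2 + (1 - gg)/2) + (-1) * x).
Proof. intros x Hx. pose proof gg_facts as [_ Hg]. pathF2. Qed.
Lemma LA_F2 : forall x, 0 < x < 0 + ((1 - gg)/2) -> exists h, iter_def 4 (ee ((1 - gg)/2) (1/2) (1/2 + (1 - gg)/2)) (ll ((1 - gg)/2) (1/2) (1/2 + (1 - gg)/2)) (TT ((1 - gg)/2) (1/2) (1/2 + (1 - gg)/2) cF2 flF2) h x (x + gg * (1/2)).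
Proof. intros x Hx. pose proof gg_facts as [_ Hg]. exists 2%nat. pathF2. Qed.
Lemma LB0_F2 : forall x, (1 - gg)/2 < x < (1 - gg)/2 + (1/2 - ((1 - gg)/2)) -> iter_def 4 (ee ((1 - gg)/2) (1/2) (1/2 + (1 - gg)/2)) (ll ((1 - gg)/2) (1/2) (1/2 + (1 - gg)/2)) (TT ((1 - gg)/2) (1/2) (1/2 + (1 - gg)/2) cF2 flF2) 0 x ((0) + (1) * x).
Proof. intros x Hx. pose proof gg_facts as [_ Hg]. pathF2. Qed.
Lemma LB1_F2 : forall x, (1 - gg)/2 < x < (1 - gg)/2 + (1/2 - ((1 - gg)/2)) -> iter_def 4 (ee ((1 - gg)/2) (1/2) (1/2 + (1 - gg)/2)) (ll ((1 - gg)/2) (1/2) (1/2 + (1 - gg)/2)) (TT ((1 - gg)/2) (1/2) (1/2 + (1 - gg)/2) cF2 flF2) 1 x ((1/2) + (1) * x).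
Proof. intros x Hx. pose proof gg_facts as [_ Hg]. pathF2. Qed.
Lemma LB_F2 : forall x, (1 - gg)/2 < x < (1 - gg)/2 + (1/2 - ((1 - gg)/2)) -> exists h, iter_def 4 (ee ((1 - gg)/2) (1/2) (1/2 + (1 - gg)/2)) (ll ((1 - gg)/2) (1/2) (1/2 + (1 - gg)/2)) (TT ((1 - gg)/2) (1/2) (1/2 + (1 - gg)/2) cF2 flF2) h x (x - ((1 - gg)/2)).
Proof. intros x Hx. pose proof gg_facts as [_ Hg]. exists 2%nat. pathF2. Qed.
Lemma coverF2 : forall y, circ_pt y -> forall eps, 0 < eps -> exists j u v, 0 <= u < v /\ v <= 1/2 /\
     forall x, u < x < v -> exists q, iter_def 4 (ee ((1 - gg)/2) (1/2) (1/2 + (1 - gg)/2)) (ll ((1 - gg)/2) (1/2) (1/2 + (1 - gg)/2)) (TT ((1 - gg)/2) (1/2) (1/2 + (1 - gg)/2) cF2 flF2) j x q /\ cdist q y < eps.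
Proof.
  intros y Hy eps Heps. unfold circ_pt in Hy. pose proof gg_facts as [_ Hg].
  (destruct (Rle_dec y ((0) + (1)*((0) + ((1 - gg)/2)))); [(apply (lev _ _ _ _ (1/2) 0%nat (0) ((1 - gg)/2) (0) (1) y eps); [lra|lra|lra|lra|exact LA0_F2|exact Heps|lra])| (destruct (Rle_dec y ((0) + (1)*(((1 - gg)/2) + (1/2 - ((1 - gg)/2))))); [(apply (lev _ _ _ _ (1/2) 0%nat ((1 - gg)/2) (1/2 - ((1 - gg)/2)) (0) (1) y eps); [lra|lra|lra|lra|exact LB0_F2|exact Heps|lra])| (destruct (Rle_dec y ((1/2 + (1 - gg)/2) + (-1)*(0))); [(apply (lev _ _ _ _ (1/2) 1%nat (0) ((1 - gg)/2) (1/2 + (1 - gg)/2) (-1) y eps); [lra|lra|lra|lra|exact LA1_F2|exact Heps|lra])| (destruct (Rle_dec y ((1/2) + (1)*(((1 - gg)/2) + (1/2 - ((1 - gg)/2))))); [(apply (lev _ _ _ _ (1/2) 1%nat ((1 - gg)/2) (1/2 - ((1 - gg)/2)) (1/2) (1) y eps); [lra|lra|lra|lra|exact LB1_F2|exact Heps|lra])| lra])])])]).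
Qed.
Lemma inF2 : in_C 4 2 (ee ((1 - gg)/2) (1/2) (1/2 + (1 - gg)/2)) (ll ((1 - gg)/2) (1/2) (1/2 + (1 - gg)/2)) (TT ((1 - gg)/2) (1/2) (1/2 + (1 - gg)/2) cF2 flF2).
Proof.
  pose proof gg_facts as [_ Hg].
  assert (Himg : forall i, (i < 4)%nat -> 0 <= cF2 i + ss flF2 i * ee ((1 - gg)/2) (1/2) (1/2 + (1 - gg)/2) i <= 1 /\
      0 <= cF2 i + ss flF2 i * ee ((1 - gg)/2) (1/2) (1/2 + (1 - gg)/2) (S i) <= 1).
  { intros i Hi. destruct i as [|[|[|[|i]]]]; try lia; cbv beta iota delta [ss ee cF2 flF2]; lra. }
  split; [|split].
  - apply tmpl_CET.
    + exact ordF2.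
    + exact Himg.
    + intros i j x y Hi Hj Hij Hx Hy'. destruct i as [|[|[|[|i]]]]; destruct j as [|[|[|[|j]]]];
        try lia; cbv beta iota delta [ss ee cF2 flF2] in *; intro; lra.
    + cbv beta iota delta [ss ee cF2 flF2]. unfold Rabs; destruct (Rcase_abs _); lra.
    + intros k Hk. destruct k as [|[|[|[|k]]]]; try lia; simpl Nat.sub; cbv beta iota delta [ss ee cF2 flF2];
        unfold Rabs; destruct (Rcase_abs _); lra.
  - apply (trans_gen _ _ _ _ (1/2) ((1 - gg)/2)); [lra|lra|intros x Hx; apply LA_F2; lra|intros x Hx; apply LB_F2; lra|exact coverF2].
  - exists flF2. split; [apply tmpl_flips; [exact ordF2|exact Himg]| reflexivity].
Qed.

Theorem corollary9p4 :
  forall f : nat, (1 <= f <= 4)%nat ->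
    exists (a l : nat -> R) (T : R -> R), in_C 4 f a l T.
Proof.
  intros f Hf. destruct f as [|[|[|[|[|f]]]]]; try lia.
  - exact (ex_intro _ _ (ex_intro _ _ (ex_intro _ _ inF1))).
  - exact (ex_intro _ _ (ex_intro _ _ (ex_intro _ _ inF2))).
  - exact (ex_intro _ _ (ex_intro _ _ (ex_intro _ _ inF3))).
  - exact (ex_intro _ _ (ex_intro _ _ (ex_intro _ _ inF4))).
Qed.
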